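(* Let $p$ be a prime, $\zeta=\zeta_p$ a primitive $p$th root of unity, $t=1-\zeta$, and let $C_p$ be cyclic with generator $c$. The cyclic Wedderburn embedding $\omega_p\colon\mathbb{Z}[\zeta]C_p\to\prod_{j\in\mathbb{Z}/p}\mathbb{Z}[\zeta]$, $c\mapsto(\zeta^j)_{j}$, maps $\mathbb{Z}[\zeta]C_p$ isomorphically onto \[ W^{(1)}_p=\Bigl\{(y_j)_{j\in[0,p-1]}\in\prod_{j\in[0,p-1]}\mathbb{Z}[\zeta]\;\Bigm|\;\sum_{j\in[0,i]}(-1)^j\binom{i}{j}y_j\equiv0\pmod{t^i\mathbb{Z}[\zeta]}\ \text{for all }i\in[0,p-1]\Bigr\}. \]
   Context: The product $\prod_{j\in\mathbb{Z}/p}$ is identified with $\prod_{j\in[0,p-1]}$ in the obvious way. *)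

(* Defs.v *)
From HB Require Import structures.
From mathcomp Require Import all_boot all_order all_algebra all_field.
Set Implicit Arguments. Unset Strict Implicit. Unset Printing Implicit Defensive.
Import Order.TTheory GRing.Theory Num.Theory.
Local Open Scope ring_scope.

(* Z[zeta] is realised inside algC (algebraic complex numbers). *)

Definition inZz (z x : algC) : Prop :=
  exists q : {poly int}, x = (map_poly (fun n : int => n%:~R : algC) q).[z].

(* x \in y * Z[z] (congruence to 0 modulo the principal ideal y Z[z]) *)
Definition dvdZz (z y x : algC) : Prop := exists2 w, inZz z w & x = y * w.

(* An element of the group ring Z[z]C_p is  sum_k a k c^k  with a : 'I_p -> Z[z].
   The cyclic Wedderburn embedding omega_p sends c to (z^j)_j, hence
   sum_k a k c^k  to  (sum_k a k z^(j k))_j . *)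
Definition wedderburn (p : nat) (z : algC) (a : 'I_p -> algC) (j : 'I_p) : algC :=
  \sum_(k < p) a k * z ^+ (j * k).

(* Multiplication in the group ring of C_p = <c>, c^p = 1 : cyclic convolution *)
Definition cconv (p : nat) (a b : 'I_p -> algC) (k : 'I_p) : algC :=
  \sum_(i < p) \sum_(l < p | ((i + l) %% p == k)%N) a i * b l.

Definition cunit (p : nat) (k : 'I_p) : algC := if (val k == 0)%N then 1 else 0.

Definition W1 (p : nat) (z : algC) (y : 'I_p -> algC) : Prop :=
  (forall j, inZz z (y j)) /\
  forall i : 'I_p,
    dvdZz z ((1 - z) ^+ i) (\sum_(j < p | (j <= i)%N) (-1) ^+ j * 'C(i, j)%:R * y j).

(* Main.v *)
Require Import Defs.
From HB Require Import structures.
From mathcomp Require Import all_boot all_order all_algebra all_field.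
From mathcomp Require Import ring.
Import Order.TTheory GRing.Theory Num.Theory.
Local Open Scope ring_scope.
Section Zz.
Variable z : algC.
Local Notation mp := (map_poly (fun n : int => n%:~R : algC)).

Lemma inZz_int (n : int) : inZz z n%:~R.
Proof. by exists n%:P; rewrite map_polyC hornerC. Qed.
Lemma inZz0 : inZz z 0. Proof. exact: (inZz_int 0). Qed.
Lemma inZz1 : inZz z 1. Proof. exact: (inZz_int 1). Qed.
Lemma inZz_nat (n : nat) : inZz z n%:R. Proof. exact: (inZz_int n). Qed.
Lemma inZz_z : inZz z z.
Proof. by exists 'X; rewrite map_polyX hornerX. Qed.
Lemma inZzD x y : inZz z x -> inZz z y -> inZz z (x + y).
Proof. by move=> [q ->] [r ->]; exists (q + r); rewrite rmorphD hornerD. Qed.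
Lemma inZzM x y : inZz z x -> inZz z y -> inZz z (x * y).
Proof. by move=> [q ->] [r ->]; exists (q * r); rewrite rmorphM hornerM. Qed.
Lemma inZzN x : inZz z x -> inZz z (- x).
Proof. by move=> [q ->]; exists (- q); rewrite rmorphN hornerN. Qed.
Lemma inZzB x y : inZz z x -> inZz z y -> inZz z (x - y).
Proof. by move=> ? ?; apply: inZzD => //; apply: inZzN. Qed.
Lemma inZzX x n : inZz z x -> inZz z (x ^+ n).
Proof. by move=> hx; elim: n => [|n IH]; [exact: inZz1 | rewrite exprS; apply: inZzM]. Qed.
Lemma inZz_sum (I : Type) (r : seq I) (P : pred I) (F : I -> algC) :
  (forall i, P i -> inZz z (F i)) -> inZz z (\sum_(i <- r | P i) F i).
Proof. by move=> h; apply: big_ind => //; [exact: inZz0 | exact: inZzD]. Qed.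
Lemma inZz_prod (I : Type) (r : seq I) (P : pred I) (F : I -> algC) :
  (forall i, P i -> inZz z (F i)) -> inZz z (\prod_(i <- r | P i) F i).
Proof. by move=> h; apply: big_ind => //; [exact: inZz1 | exact: inZzM]. Qed.
Lemma inZz_zX n : inZz z (z ^+ n). Proof. exact/inZzX/inZz_z. Qed.
Lemma inZz_sign n : inZz z ((-1) ^+ n). Proof. exact/inZzX/inZzN/inZz1. Qed.

Lemma inZz_det n (A : 'M[algC]_n) : (forall i j, inZz z (A i j)) -> inZz z (\det A).
Proof.
move=> h; rewrite /determinant; apply: inZz_sum => s _.
apply: inZzM; first exact: inZz_sign.
by apply: inZz_prod => i _.
Qed.

Lemma inZz_adj n (A : 'M[algC]_n) : (forall i j, inZz z (A i j)) ->
  forall i j, inZz z (\adj A i j).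
Proof.
move=> h i j; rewrite /adjugate mxE /cofactor; apply: inZzM; first exact: inZz_sign.
by apply: inZz_det => k l; rewrite !mxE.
Qed.

Lemma inZz_mulmx m n l (A : 'M[algC]_(m, n)) (B : 'M[algC]_(n, l)) :
  (forall i j, inZz z (A i j)) -> (forall i j, inZz z (B i j)) ->
  forall i j, inZz z ((A *m B) i j).
Proof. by move=> hA hB i j; rewrite mxE; apply: inZz_sum => k _; apply: inZzM. Qed.
End Zz.

Section Main.
Variables (p : nat) (z : algC).
Hypotheses (pp : prime p) (pz : p.-primitive_root z).

Definition uu (k : nat) : algC := \sum_(r < k) z ^+ r.

Lemma one_subX k : 1 - z ^+ k = (1 - z) * uu k.
Proof. by rewrite -opprB subrX1 -mulNr opprB. Qed.

Lemma binsum (a : 'I_p -> algC) (i : 'I_p) :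
  \sum_(j < p | (j <= i)%N) (-1) ^+ j * 'C(i, j)%:R * wedderburn z a j
  = (1 - z) ^+ i * \sum_(k < p) a k * uu k ^+ i.
Proof.
rewrite /wedderburn.
under eq_bigr do rewrite mulr_sumr.
rewrite exchange_big /= mulr_sumr; apply: eq_bigr => k _.
rewrite mulrCA -exprMn -one_subX -[1 - _]addrC exprD1n.
rewrite (big_ord_widen p (fun j => (- z ^+ k) ^+ j *+ 'C(i, j))) ?ltn_ord // mulr_sumr; apply: eq_bigr => j _.
by rewrite (exprNn (z ^+ k)) -exprM (mulnC k j) -mulr_natr; ring.
Qed.
End Main.

Section Main2.
Variables (p : nat) (z : algC).
Hypotheses (pp : prime p) (pz : p.-primitive_root z).

Lemma p_gt1 : (1 < p)%N. Proof. exact: prime_gt1. Qed.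
Lemma p_gt0 : (0 < p)%N. Proof. exact: prime_gt0. Qed.

Lemma zX_eq1 k : (z ^+ k == 1) = (p %| k)%N.
Proof. by rewrite (prim_order_dvd pz). Qed.

Lemma one_subz_neq0 : 1 - z != 0.
Proof.
rewrite subr_eq0 eq_sym -[z]expr1 zX_eq1.
by apply/negP => /dvdn_leq -/(_ isT); rewrite leqNgt p_gt1.
Qed.

Definition unitZ (x : algC) := exists v, inZz z v /\ x * v = 1.

Lemma unitZM x y : unitZ x -> unitZ y -> unitZ (x * y).
Proof.
move=> [v [hv e]] [w [hw f]]; exists (v * w); split; first exact: inZzM.
by rewrite mulrACA e f mulr1.
Qed.

Lemma unitZ_prod (I : Type) (r : seq I) (P : pred I) (F : I -> algC) :
  (forall i, P i -> unitZ (F i)) -> unitZ (\prod_(i <- r | P i) F i).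
Proof.
move=> h; apply: big_ind => //; last exact: unitZM.
by exists 1; split; [exact: inZz1 | rewrite mulr1].
Qed.

Lemma unitZ_zX i : unitZ (z ^+ i).
Proof.
exists (z ^+ (i * p.-1)); split; first exact: inZz_zX.
rewrite -exprD -{1}[i]muln1 -mulnDr add1n prednK ?p_gt0 //.
by rewrite mulnC exprM (prim_expr_order pz) expr1n.
Qed.

Lemma unitZ_uu m : (0 < m < p)%N -> unitZ (uu z m).
Proof.
move=> /andP [m0 mp].
have cop : coprime m p.
  by rewrite coprime_sym prime_coprime // ; apply/negP => /dvdn_leq -/(_ m0); rewrite leqNgt mp.
have pzm : p.-primitive_root (z ^+ m) by rewrite prim_root_exp_coprime.
have [i ei] := prim_rootP pzm (prim_expr_order pz).
exists (uu (z ^+ m) i); split; first by apply: inZz_sum => r _; rewrite -exprM; exact: inZz_zX.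
apply: (mulfI one_subz_neq0).
by rewrite mulr1 mulrA -(one_subX z m) -(one_subX (z ^+ m) i) -ei.
Qed.

Lemma uu_diff {i j} : (i <= j)%N -> uu z j - uu z i = z ^+ i * uu z (j - i).
Proof.
move=> ij; apply: (mulfI one_subz_neq0).
rewrite mulrBr -!one_subX mulrCA -one_subX mulrBr -exprD subnKC //.
by rewrite mulr1 opprB addrC addrA subrK.
Qed.

Lemma unitZ_diff i j : (i < j < p)%N -> unitZ (uu z j - uu z i).
Proof.
move=> /andP [ij jp]; rewrite (uu_diff (ltnW ij)); apply: unitZM; first exact: unitZ_zX.
by apply: unitZ_uu; rewrite subn_gt0 ij /= (leq_ltn_trans (leq_subr _ _) jp).
Qed.

Definition UU : 'M[algC]_p := \matrix_(i < p, k < p) uu z k ^+ i.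

Lemma unitZ_detU : unitZ (\det UU).
Proof.
have -> : UU = Vandermonde p (\row_k uu z k) by apply/matrixP => i k; rewrite !mxE.
rewrite det_Vandermonde; apply: unitZ_prod => i _; apply: unitZ_prod => j ij.
by rewrite !mxE; apply: unitZ_diff; rewrite ij ltn_ord.
Qed.

Lemma UU_surj (w : 'I_p -> algC) : (forall i, inZz z (w i)) ->
  exists a : 'I_p -> algC, (forall k, inZz z (a k)) /\
    forall i : 'I_p, \sum_(k < p) a k * uu z k ^+ i = w i.
Proof.
move=> hw; have [D [hD eD]] := unitZ_detU.
pose wc : 'cV[algC]_p := \col_i w i.
pose X := \adj UU *m wc.
exists (fun k => D * X k 0); split.
  move=> k; apply: inZzM => //; apply: inZz_mulmx => [i j|i j]; last by rewrite mxE.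
  apply: inZz_adj => i' j'; rewrite mxE; apply: inZzX; apply: inZz_sum => r _; exact: inZz_zX.
move=> i.
have : (UU *m X) i 0 = (\det UU *: wc) i 0 by rewrite /X mulmxA mul_mx_adj mul_scalar_mx.
rewrite !mxE => e.
transitivity (D * \sum_(k < p) UU i k * X k 0).
  rewrite mulr_sumr; apply: eq_bigr => k _.
  have -> : UU i k = uu z k ^+ i by rewrite /UU mxE.
  by rewrite mulrAC -mulrA.
by rewrite e mulrA (mulrC D) eD mul1r.
Qed.

Lemma UU_inj (a b : 'I_p -> algC) :
  (forall i : 'I_p, \sum_(k < p) a k * uu z k ^+ i = \sum_(k < p) b k * uu z k ^+ i) ->
  forall k, a k = b k.
Proof.
move=> h k; have [D [_ eD]] := unitZ_detU.
have dn0 : \det UU != 0 by apply/eqP => d0; move: eD; rewrite d0 mul0r => /eqP; rewrite eq_sym oner_eq0.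
pose ac : 'cV[algC]_p := \col_i a i.
pose bc : 'cV[algC]_p := \col_i b i.
have eU : UU *m ac = UU *m bc.
  apply/matrixP => i j; rewrite !mxE.
  have := h i; rewrite (eq_bigr (fun k => UU i k * ac k j)); last by move=> l _; rewrite !mxE mulrC.
  by move=> ->; apply: eq_bigr => l _; rewrite !mxE mulrC.
have : \adj UU *m (UU *m ac) = \adj UU *m (UU *m bc) by rewrite eU.
rewrite !mulmxA mul_adj_mx !mul_scalar_mx => /matrixP /(_ k 0).
by rewrite !mxE => /(mulfI dn0).
Qed.

Lemma binom_inj (y y' : 'I_p -> algC) :
  (forall i : 'I_p, \sum_(j < p | (j <= i)%N) (-1) ^+ j * 'C(i, j)%:R * y j
                  = \sum_(j < p | (j <= i)%N) (-1) ^+ j * 'C(i, j)%:R * y' j) ->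
  forall j, y j = y' j.
Proof.
move=> h.
suff H : forall n (j : 'I_p), val j = n -> y j = y' j by move=> j; exact: H.
elim/ltn_ind => n IH j jn.
have := h j; rewrite (bigD1 j) //= [in RHS](bigD1 j) //=.
rewrite (eq_bigr (fun l : 'I_p => (-1) ^+ l * 'C(j, l)%:R * y' l)); last first.
  move=> l /andP [lj lnj]; rewrite (IH l) //; rewrite -jn ltn_neqAle lj andbT.
  by apply: contra lnj => /eqP e; apply/eqP/val_inj.
move/addIr; rewrite binn mulr1; apply: mulfI.
by rewrite signr_eq0.
Qed.

End Main2.

Theorem proposition3p19 (p : nat) (zeta : algC) :
  prime p -> p.-primitive_root zeta ->
  (* omega_p is a ring homomorphism Z[zeta]C_p -> prod_j Z[zeta] *)
  (forall j : 'I_p, wedderburn zeta (@cunit p) j = 1) /\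
  (forall a b : 'I_p -> algC, (forall k, inZz zeta (a k)) -> (forall k, inZz zeta (b k)) ->
     forall j, wedderburn zeta (cconv a b) j = wedderburn zeta a j * wedderburn zeta b j) /\
  (* it is injective *)
  (forall a b : 'I_p -> algC, (forall k, inZz zeta (a k)) -> (forall k, inZz zeta (b k)) ->
     (forall j, wedderburn zeta a j = wedderburn zeta b j) -> forall k, a k = b k) /\
  (* and its image is exactly W^(1)_p *)
  (forall y : 'I_p -> algC,
     (exists a : 'I_p -> algC, (forall k, inZz zeta (a k)) /\
                               forall j, wedderburn zeta a j = y j)
     <-> W1 zeta y).
Proof.
move=> pp pz; have p0 := prime_gt0 pp.
split.
  move=> j; rewrite /wedderburn (bigD1 (Ordinal p0)) //= big1 ?addr0.
    by rewrite /cunit /= mul1r muln0 expr0.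
  move=> k nk; rewrite /cunit ifF ?mul0r //; apply: contraNF nk => /eqP e.
  by apply/eqP/val_inj.
split.
  move=> a b _ _ j; rewrite /wedderburn /cconv big_distrlr /=.
  under eq_bigr do rewrite mulr_suml.
  rewrite exchange_big /=; apply: eq_bigr => i _.
  under eq_bigr do rewrite mulr_suml big_mkcond.
  rewrite exchange_big /=; apply: eq_bigr => l _.
  rewrite -big_mkcond /= (big_pred1 (Ordinal (ltn_pmod (i + l) p0))); last first.
    by move=> k /=; rewrite -val_eqE /= eq_sym.
  have -> : zeta ^+ (j * ((i + l) %% p)) = zeta ^+ (j * i) * zeta ^+ (j * l).
    by rewrite -(prim_expr_mod pz) modnMmr (prim_expr_mod pz) mulnDr exprD.
  by rewrite /= mulrACA.
split.
  move=> a b _ _ h; apply: (UU_inj p zeta pp pz) => i.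
  apply: (mulfI (expf_neq0 i (one_subz_neq0 p zeta pp pz))).
  rewrite -(binsum p zeta a i) -(binsum p zeta b i).
  by apply: eq_bigr => j _; rewrite h.
move=> y; split.
  move=> [a [ha ea]]; split.
    move=> j; rewrite -ea; apply: inZz_sum => k _; apply: inZzM => //; exact: inZz_zX.
  move=> i; exists (\sum_(k < p) a k * uu zeta k ^+ i).
    apply: inZz_sum => k _; apply: inZzM => //; apply: inZzX; apply: inZz_sum => r _; exact: inZz_zX.
  rewrite -(binsum p zeta a i); apply: eq_bigr => j _; by rewrite ea.
move=> [hy hW].
have [w hw1 hw2] := fin_all_exists2 hW.
have [a [ha ea]] := UU_surj p zeta pp pz w hw1.
exists a; split => //.
apply: binom_inj => i; by rewrite binsum ea hw2.
Qed.
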